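(* Any $D$-norm on $\mathbb{R}^{d+1}$ having a generator $\mathbf{Z}=(Z_0,\dots,Z_d)$ with $Z_i>0$ for all $0\le i\le d$ is also an $F$-norm on $\mathbb{R}^{d+1}$.
   Context: A $D$-norm on $\mathbb{R}^{d+1}$ is a norm of the form $\|\mathbf{x}\|_D=E(\max(|x_0|Z_0,\dots,|x_d|Z_d))$, where $\mathbf{Z}$ is componentwise nonnegative with $E(Z_i)=1$ for each $i$ (a generator). An $F$-norm on $\mathbb{R}^{d+1}$ is a norm of the form $E(\max(|x_0|,|x_1|X_1,\dots,|x_d|X_d))$ for a random vector $(X_1,\dots,X_d)$ whose components are a.s. nonnegative with $0<E(X_i)<\infty$. *)

(* Defs.v *)
From HB Require Import structures.
From mathcomp Require Import all_boot all_order all_algebra.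
From mathcomp Require Import all_classical all_reals all_analysis.
Set Implicit Arguments. Unset Strict Implicit. Unset Printing Implicit Defensive.
Import Order.TTheory GRing.Theory Num.Theory.
Local Open Scope ring_scope.

(* Vectors of R^(d+1) are functions 'I_d.+1 -> R, indexed 0..d.
   A random vector on (T, P) is a function Z : T -> 'I_n -> R whose
   components are measurable. *)

Definition is_generator (R : realType) (dT : measure_display)
    (T : measurableType dT) (P : probability T R) (n : nat)
    (Z : T -> 'I_n -> R) : Prop :=
  (forall i, measurable_fun [set: T] (fun w => Z w i)) /\
  (forall i, {ae P, forall w, 0 <= Z w i}) /\
  (forall i, ('E_P[fun w => Z w i] = 1)%E).

Definition Dnorm_expr (R : realType) (dT : measure_display)
    (T : measurableType dT) (P : probability T R) (d : nat)
    (Z : T -> 'I_d.+1 -> R) (x : 'I_d.+1 -> R) : \bar R :=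
  'E_P[fun w => \big[Num.max/0]_(i < d.+1) (`|x i| * Z w i)].

Definition is_Dnorm (R : realType) (d : nat) (N : ('I_d.+1 -> R) -> R) : Prop :=
  exists (dT : measure_display) (T : measurableType dT) (P : probability T R)
         (Z : T -> 'I_d.+1 -> R),
    is_generator P Z /\ forall x, (N x)%:E = Dnorm_expr P Z x.

(* E(max(|x_0|, |x_1| X_1, ..., |x_d| X_d)), with X = (X_1,...,X_d)
   indexed by 'I_d (X j corresponds to X_{j+1}) *)
Definition Fnorm_expr (R : realType) (dT : measure_display)
    (T : measurableType dT) (P : probability T R) (d : nat)
    (X : T -> 'I_d -> R) (x : 'I_d.+1 -> R) : \bar R :=
  'E_P[fun w => Num.max `|x ord0|
          (\big[Num.max/0]_(j < d) (`|x (lift ord0 j)| * X w j))].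

Definition is_Fnorm (R : realType) (d : nat) (N : ('I_d.+1 -> R) -> R) : Prop :=
  exists (dT : measure_display) (T : measurableType dT) (P : probability T R)
         (X : T -> 'I_d -> R),
    (forall j, measurable_fun [set: T] (fun w => X w j)) /\
    (forall j, {ae P, forall w, 0 <= X w j}) /\
    (forall j, (0 < 'E_P[fun w => X w j] < +oo)%E) /\
    forall x, (N x)%:E = Fnorm_expr P X x.

(* Main.v *)
Require Import Defs.
From HB Require Import structures.
From mathcomp Require Import all_boot all_order all_algebra.
From mathcomp Require Import all_classical all_reals all_analysis.
From mathcomp Require Import measurable_realfun lebesgue_integral charge.
Import Order.TTheory GRing.Theory Num.Theory.
Local Open Scope ring_scope.
Local Open Scope classical_set_scope.

Section density.
Context d (T : measurableType d) (R : realType) (P : probability T R) (g : T -> R).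
Hypotheses (mg : measurable_fun setT g) (g0 : forall x, 0 <= g x)
  (g1 : (\int[P]_x (g x)%:E = 1)%E).
Local Open Scope ereal_scope.

Definition dens (A : set T) : \bar R :=
  let _ := mg in let _ := g0 in let _ := g1 in \int[P]_(x in A) (g x)%:E.

Let mgE : measurable_fun setT (fun x => (g x)%:E).
Proof. exact/measurable_EFinP. Qed.

Let dens0 : dens set0 = 0.
Proof. by rewrite /dens integral_set0. Qed.

Let dens_ge0 A : 0 <= dens A.
Proof. by rewrite /dens integral_ge0// => x _; rewrite lee_fin. Qed.

Let dens_sigma : semi_sigma_additive dens.
Proof.
rewrite /dens; apply: semi_sigma_additive_nng_induced => // x.
Qed.

HB.instance Definition _ := isMeasure.Build _ _ _ dens dens0 dens_ge0 dens_sigma.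

Let densT : dens setT = 1.
Proof. by rewrite /dens. Qed.

HB.instance Definition _ := Measure_isProbability.Build _ _ _ dens densT.

Import HBNNSimple.

Lemma dens_change f E : (forall x, 0 <= f x) ->
    measurable E -> measurable_fun E f ->
  \int[P]_(x in E) (f x * (g x)%:E) = \int[dens]_(x in E) f x.
Proof.
move=> f0 mE mf.
pose h := nnsfun_approx mE mf.
have -> : \int[dens]_(x in E) f x =
    lim (\int[dens]_(x in E) (EFin \o h n) x @[n --> \oo]).
  have fE x : E x -> f x = lim ((EFin \o h n) x @[n --> \oo]).
    by move=> Ex; apply/esym/cvg_lim => //; exact: cvg_nnsfun_approx.
  under eq_integral => x /[!inE] /fE -> //.
  apply: monotone_convergence => //.
  - move=> n; apply/measurable_EFinP.
    by apply: (measurable_funS measurableT) => //; exact/measurable_funP.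
  - by move=> n x Ex //=; rewrite lee_fin.
  - by move=> x Ex a b ab; rewrite lee_fin; exact/lefP/nd_nnsfun_approx.
have -> : \int[P]_(x in E) (f x * (g x)%:E) =
    lim (\int[P]_(x in E) ((EFin \o h n) x * (g x)%:E) @[n --> \oo]).
  have fg x : E x -> f x * (g x)%:E = lim (((EFin \o h n) x * (g x)%:E) @[n --> \oo]).
    by move=> Ex; apply/esym/cvg_lim => //; apply: cvgeZr;
      [|exact: cvg_nnsfun_approx].
  under eq_integral => x /[!inE] /fg -> //.
  apply: monotone_convergence => [//| | |].
  - move=> n; apply/emeasurable_funM; apply/measurable_funTS.
      exact/measurable_EFinP.
    exact: mgE.
  - by move=> n x Ex /=; rewrite mule_ge0 ?lee_fin.
  - by move=> x Ex a b ab/=; rewrite lee_wpmul2r ?lee_fin//; exact/lefP/nd_nnsfun_approx.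
suff suf n : \int[P]_(x in E) ((EFin \o h n) x * (g x)%:E) =
    \int[dens]_(x in E) (EFin \o h n) x.
  by under eq_fun do rewrite suf.
transitivity (\int[dens]_(x in E)
   (\sum_(y \in range (h n)) (y * \1_(h n @^-1` [set y]) x)%:E)); last first.
  by apply: eq_integral => t tE; rewrite /= fimfunE -fsumEFin.
have indich m r : measurable_fun E (fun x => (r * \1_(h m @^-1` [set r]) x)%:E).
  by apply: (measurable_comp measurableT) => //; exact: measurable_funM.
rewrite ge0_integral_fsum//; last by move=> m y Ey; exact: nnfun_muleindic_ge0.
transitivity (\int[P]_(x in E) (\sum_(y \in range (h n))
    (y * \1_(h n @^-1` [set y]) x)%:E * (g x)%:E)).
  under [RHS]eq_integral => x xE.
    rewrite -ge0_mule_fsuml => [|y]; last exact: nnfun_muleindic_ge0.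
    rewrite fsumEFin // -(fimfunE _ x); over.
  by [].
rewrite ge0_integral_fsum//; last 2 first.
  - move=> y; apply: emeasurable_funM => //; apply: measurable_funTS.
    exact: mgE.
  - by move=> m y Ey; rewrite mule_ge0 ?nnfun_muleindic_ge0 ?lee_fin.
apply: eq_fsbigr => r rhn.
under [RHS]eq_integral do rewrite EFinM.
rewrite integralZl_indic_nnsfun => //.
under eq_integral do rewrite EFinM -muleA.
rewrite ge0_integralZl//.
- under eq_integral do rewrite muleC.
  rewrite (eq_integral ((fun x => (g x)%:E) \_ (h n @^-1` [set r]))); last first.
    by move=> x xE; rewrite epatch_indic.
  by rewrite -integral_mkcondr integral_indic// setIC.
- apply: emeasurable_funM; first exact/measurable_EFinP.
  exact/measurable_funTS/mgE.
- by move=> t Et; rewrite mule_ge0 ?lee_fin.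
- by move: rhn; rewrite inE => -[t _ <-]; rewrite lee_fin.
Qed.

End density.
Lemma measurable_invr (R : realType) : measurable_fun [set: R] (fun x : R => x^-1).
Proof.
have -> : [set: R] = ~` [set 0] `|` [set 0] by rewrite setvU.
apply/measurable_funU.
- by apply: measurableC; exact: measurable_set1.
- exact: measurable_set1.
split.
- apply: open_continuous_measurable_fun.
    by apply: closed_openC; apply: accessible_closed_set1; apply: hausdorff_accessible; exact: Rhausdorff.
  by move=> x; rewrite inE /= => /eqP x0; exact: inv_continuous.
- move=> _ B mB; have [B0|B0] := pselect (B (0:R)^-1).
    rewrite (_ : _ `&` _ = [set 0]); first exact: measurable_set1.
    by apply/seteqP; split => [x [->]//|x -> /=]; split.
  rewrite (_ : _ `&` _ = set0) //.
  by apply/seteqP; split => [x [/= -> ]//|x].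
Qed.

Lemma measurable_bigmax d (T : measurableType d) (R : realType) n
  (f : 'I_n -> T -> R) : (forall i, measurable_fun setT (f i)) ->
  measurable_fun setT (fun w => \big[Num.max/0]_(i < n) f i w).
Proof.
elim: n f => [|n IH] f mf.
  by under eq_fun do rewrite big_ord0; exact: measurable_cst.
under eq_fun do rewrite big_ord_recl.
apply: (measurable_maxr (mf ord0)).
exact: (IH (fun i => f (lift ord0 i))).
Qed.

Lemma bigmaxM (R : realType) n (F : 'I_n -> R) c : 0 <= c ->
  (\big[Num.max/0]_(i < n) F i) * c = \big[Num.max/0]_(i < n) (F i * c).
Proof.
move=> c0; elim/big_rec2: _ => [|i y1 y2 _ <-]; first by rewrite mul0r.
by rewrite maxr_pMl.
Qed.

Lemma pointwise (R : realType) d (x : 'I_d.+1 -> R) (z : 'I_d.+1 -> R) :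
  (forall i, 0 < z i) ->
  Num.max `|x ord0| (\big[Num.max/0]_(j < d)
     (`|x (lift ord0 j)| * Num.max 0 (z (lift ord0 j) / z ord0)))
   * Num.max (z ord0) 0 = \big[Num.max/0]_(i < d.+1) (`|x i| * z i).
Proof.
move=> zp; have z0 := zp ord0.
have -> : Num.max (z ord0) 0 = z ord0 by apply/max_idPl; exact: ltW.
rewrite big_ord_recl maxr_pMl ?ltW //.
congr Num.max; rewrite bigmaxM ?ltW //; apply: eq_bigr => j _.
have -> : Num.max 0 (z (lift ord0 j) / z ord0) = z (lift ord0 j) / z ord0.
  by apply/max_idPr; rewrite divr_ge0 // ltW.
by rewrite -mulrA mulfVK // gt_eqF.
Qed.

Theorem corollary2p20 (R : realType) (d : nat) (N : ('I_d.+1 -> R) -> R) :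
  (exists (dT : measure_display) (T : measurableType dT) (P : probability T R)
          (Z : T -> 'I_d.+1 -> R),
     is_generator P Z /\
     (forall i, {ae P, forall w, 0 < Z w i}) /\
     forall x, (N x)%:E = Dnorm_expr P Z x) ->
  is_Fnorm N.
Proof.
move=> [dT [T [P [Z [[mZ [Z0 E1]] [Zpos HN]]]]]].
have H : \forall w \ae P, forall n (i : 'I_d.+1), (i : nat) = n -> 0 < Z w i.
  apply: ae_foralln => n; case: (ltnP n d.+1) => hn.
    apply: filterS (Zpos (Ordinal hn)) => w hw i hi.
    by have -> : i = Ordinal hn by apply: val_inj.
  by apply: aeW => w i hi; move: (ltn_ord i); rewrite hi ltnNge hn.
have H' : \forall w \ae P, forall i, 0 < Z w i.
  by apply: filterS H => w Hw i; exact: (Hw _ i erefl).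
pose g w := Num.max (Z w ord0) 0.
have mg : measurable_fun setT g.
  by apply: measurable_maxr => //; exact: mZ.
have g0 w : 0 <= g w by rewrite /g le_max lexx orbT.
have g1 : (\int[P]_x (g x)%:E = 1)%E.
  rewrite -(E1 ord0) expectation.unlock; apply: ae_eq_integral => //.
  - exact/measurable_EFinP.
  - exact/measurable_EFinP/mZ.
  apply: filterS H' => w Hw _; congr EFin.
  by apply/max_idPl; exact: ltW.
pose Q := @dens _ _ _ P g mg g0 g1.
pose X w (j : 'I_d) : R := Num.max 0 (Z w (lift ord0 j) / Z w ord0).
have mX j : measurable_fun setT (fun w => X w j).
  apply: measurable_maxr; first exact: measurable_cst.
  apply: measurable_funM; first exact: mZ.
  exact: (measurableT_comp (@measurable_invr R) (mZ ord0)).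
exists dT, T, Q, X; split => //; split.
  by move=> j; apply: aeW => w; rewrite /X le_max lexx.
split.
  move=> j; have -> : ('E_Q[fun w => X w j] = 1)%E.
    rewrite -(E1 (lift ord0 j)) !expectation.unlock.
    rewrite -dens_change //; last exact/measurable_EFinP.
      apply: ae_eq_integral => //.
      - apply: emeasurable_funM; exact/measurable_EFinP.
      - exact/measurable_EFinP/mZ.
      apply: filterS H' => w Hw _; rewrite -EFinM; congr EFin.
      rewrite /X /g.
      have -> : Num.max (Z w ord0) 0 = Z w ord0 by apply/max_idPl; exact: ltW.
      have -> : Num.max 0 (Z w (lift ord0 j) / Z w ord0) = Z w (lift ord0 j) / Z w ord0.
        by apply/max_idPr; rewrite divr_ge0 // ltW.
      by rewrite mulfVK // gt_eqF.
    by move=> w; rewrite lee_fin /X le_max lexx.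
  by rewrite lte01 ltey.
move=> x; rewrite HN /Fnorm_expr /Dnorm_expr !expectation.unlock.
rewrite -dens_change //; last first.
  apply/measurable_EFinP; apply: measurable_maxr; first exact: measurable_cst.
  apply: (@measurable_bigmax _ _ _ _ (fun j w => `|x (lift ord0 j)| * X w j)) => j.
  by apply: measurable_funM; [exact: measurable_cst|exact: mX].
  by move=> w; rewrite lee_fin le_max normr_ge0.
apply: ae_eq_integral => //.
- apply/measurable_EFinP.
  apply: (@measurable_bigmax _ _ _ _ (fun i w => `|x i| * Z w i)) => i.
  by apply: measurable_funM; [exact: measurable_cst|exact: mZ].
- apply: emeasurable_funM; apply/measurable_EFinP => //.
  apply: measurable_maxr; first exact: measurable_cst.
  apply: (@measurable_bigmax _ _ _ _ (fun j w => `|x (lift ord0 j)| * X w j)) => j.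
  by apply: measurable_funM; [exact: measurable_cst|exact: mX].
apply: filterS H' => w Hw _; rewrite -EFinM; congr EFin.
by rewrite /X /g pointwise.
Qed.
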